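(* Suppose $D$ is the class of transvections in the unitary group $\mathrm{SU}_{n+1}(2)$, $n\ge2$. Then $\mathcal{A}(D)/\mathcal{V}(D)$ is isomorphic to the Lie algebra of type ${}^2A_n(2)$ modulo its center.
   Context: For a class $D$ of $3$-transpositions generating a group (involutions with $o(de)\in\{1,2,3\}$): lines are triples $\{d,e,d^e\}$ with $d,e$ non-commuting; $\mathcal{A}(D)$ is the $\mathbb{F}_2$-space with basis $D$ and bilinear product $d*e=d+e+f$ if $\{d,e,f\}$ is a line, $0$ otherwise; the form $\langle d,e\rangle$ is $1$ if $d,e$ do not commute and $0$ otherwise; $\mathcal{V}(D)$ is its radical. The Lie algebra of type ${}^2A_n(2)$ is the $\mathbb{F}_2$-Lie algebra $\mathfrak g_2$ generated, inside the split simple Lie algebra $\mathfrak g$ of type $A_n$ over $\mathbb{F}_4$ with Chevalley basis $\{\mathfrak x_\alpha\}\cup\{[\mathfrak x_\alpha,\mathfrak x_{-\alpha}]\}$, by the elements $\omega\mathfrak x_\alpha+\bar\omega\mathfrak x_{-\alpha}+\omega\bar\omega[\mathfrak x_\alpha,\mathfrak x_{-\alpha}]$ ($\alpha$ a root, $\omega\in\mathbb{F}_4^*$, $\bar\omega=\omega^2$); equivalently the unitary Lie algebra $\mathfrak{su}_{n+1}(2)$. *)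

(* Defs.v *)
From mathcomp Require Import all_boot all_algebra.
Set Implicit Arguments. Unset Strict Implicit. Unset Printing Implicit Defensive.
Import GRing.Theory.
Local Open Scope ring_scope.

Section Defs.
Variables (F : finFieldType) (n : nat).

(* field involution of F_4 : x |-> x^2 *)
Definition conjF (x : F) : F := x ^+ 2.

(* SU_{n+1}(2) w.r.t. the standard hermitian form h(x,y) = sum_i x_i conj(y_i):
   M^T * conj(M) = 1 and det M = 1 *)
Definition is_SU (M : 'M[F]_(n.+1)) : bool :=
  (\det M == 1) && (M^T *m map_mx conjF M == 1%:M).

Definition is_transvection (M : 'M[F]_(n.+1)) : bool :=
  (\rank (M - 1%:M) == 1%N) && ((M - 1%:M) *m (M - 1%:M) == 0).

Definition D_pred (M : 'M[F]_(n.+1)) : bool := is_SU M && is_transvection M.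

Definition Dtype := {M : 'M[F]_(n.+1) | D_pred M}.

Local Notation Aalg := {ffun Dtype -> 'F_2}.

Definition basisM (m : 'M[F]_(n.+1)) : Aalg := [ffun x : Dtype => ((val x == m) : nat)%:R].

Definition commuteD (d e : Dtype) : bool := val d *m val e == val e *m val d.

(* d * e = d + e + d^e on lines, 0 otherwise *)
Definition prodBasis (d e : Dtype) : Aalg :=
  if ~~ commuteD d e then
    basisM (val d) + basisM (val e) + basisM (val e *m val d *m val e)
  else 0.

(* bilinear extension (scalars in F_2 = {0,1}) *)
Definition prodA (a b : Aalg) : Aalg :=
  \sum_(d : Dtype) \sum_(e : Dtype) (if a d * b e == 0 then 0 else prodBasis d e).

Definition formA (a b : Aalg) : 'F_2 :=
  \sum_(d : Dtype) \sum_(e : Dtype) a d * b e * ((~~ commuteD d e) : nat)%:R.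

Definition radV (a : Aalg) : Prop := forall b, formA a b = 0.

(* generators of the Lie algebra of type 2A_n(2) inside sl_{n+1}(F_4):
   w x_a + conj(w) x_{-a} + w conj(w) [x_a, x_{-a}], x_a = E_ij, x_{-a} = E_ji *)
Definition g2gen (i j : 'I_n.+1) (w : F) : 'M[F]_(n.+1) :=
  w *: delta_mx i j + conjF w *: delta_mx j i
  + (w * conjF w) *: (delta_mx i i - delta_mx j j).

Definition lie (x y : 'M[F]_(n.+1)) : 'M[F]_(n.+1) := x *m y - y *m x.

Inductive in_g2 : 'M[F]_(n.+1) -> Prop :=
| g2_gen i j w : i != j -> w != 0 -> in_g2 (g2gen i j w)
| g2_zero : in_g2 0
| g2_add x y : in_g2 x -> in_g2 y -> in_g2 (x + y)
| g2_lie x y : in_g2 x -> in_g2 y -> in_g2 (lie x y).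

Definition in_center (z : 'M[F]_(n.+1)) : Prop :=
  in_g2 z /\ forall y, in_g2 y -> lie z y = 0.

End Defs.

Notation Aalg F n := {ffun Dtype F n -> 'F_2}.

(* Main.v *)
Require Import Defs.
From mathcomp Require Import all_boot all_algebra all_field.
From mathcomp Require Import ring.
Set Implicit Arguments. Unset Strict Implicit. Unset Printing Implicit Defensive.
Import GRing.Theory.
Local Open Scope ring_scope.
Section S.
Variables (F : finFieldType) (n : nat).
Hypothesis hF : #|F| = 4%N.
Lemma ch2 : 2%N \in [pchar F].
Proof. by apply: (@card_finPcharP _ 2 2) => //. Qed.
Lemma two0 : 2%:R = 0 :> F.
Proof. by apply/eqP; have := ch2; rewrite inE => /andP[]. Qed.
Lemma addxx (x : F) : x + x = 0.
Proof. by rewrite -mulr2n -mulr_natr two0 mulr0. Qed.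
Lemma oppF (x : F) : - x = x.
Proof. by apply/eqP; rewrite eq_sym -subr_eq0 opprK addxx. Qed.
Lemma x4 (x : F) : x ^+ 4 = x.
Proof. by rewrite -{2}(expf_card x) hF. Qed.
Lemma conjFE : (@conjF F) =1 pFrobenius_aut ch2 :> (F -> F).
Proof. by []. Qed.
Lemma ccF (x : F) : conjF (conjF x) = x.
Proof. by rewrite /conjF -exprM x4. Qed.
Lemma conjD (x y : F) : conjF (x + y) = conjF x + conjF y.
Proof. by rewrite !conjFE rmorphD. Qed.
Lemma conjM (x y : F) : conjF (x * y) = conjF x * conjF y.
Proof. by rewrite !conjFE rmorphM. Qed.
Lemma norm1 (x : F) : x != 0 -> x * conjF x = 1.
Proof.
move=> x0; apply: (mulfI x0); rewrite mulr1 /conjF -!exprS.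
exact: x4.
Qed.
Lemma normb (x : F) : x * conjF x = (x != 0)%:R.
Proof. by case: eqP => [->|/eqP]; [rewrite mul0r|move/norm1]. Qed.
Lemma omega_ex : exists w : F, [/\ w != 0, w != 1 & 1 + w + w ^+ 2 = 0].
Proof.
have : exists w : F, w \notin [:: 0; 1].
  apply/existsP; rewrite -negb_forall; apply/negP => /forallP H.
  have : (#|F| <= size [:: (0:F)%R; (1:F)%R])%N.
    apply: leq_trans (card_size _); apply: subset_leq_card; apply/subsetP => x _; exact: H.
  by rewrite hF.
case=> w; rewrite !inE negb_or => /andP[w0 w1]; exists w; split => //.
have e3 : w ^+ 3 = 1 by have := norm1 w0; rewrite /conjF -exprS.
have : (w - 1) * (1 + w + w ^+ 2) = 0.
  have -> : (w - 1) * (1 + w + w ^+ 2) = w ^+ 3 - 1 by ring.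
  by rewrite e3 subrr.
by move/eqP; rewrite mulf_eq0 subr_eq0 (negPf w1) /= => /eqP.
Qed.

Definition cT p q (A : 'M[F]_(p, q)) : 'M[F]_(q, p) := (map_mx (@conjF F) A)^T.

Lemma cTE p q (A : 'M[F]_(p, q)) i j : cT A i j = conjF (A j i).
Proof. by rewrite !mxE. Qed.
Lemma cTM p q r (A : 'M[F]_(p, q)) (B : 'M[F]_(q, r)) : cT (A *m B) = cT B *m cT A.
Proof.
rewrite /cT -trmx_mul; congr (_^T).
by rewrite !(eq_map_mx _ conjFE) map_mxM.
Qed.
Lemma cTK p q (A : 'M[F]_(p, q)) : cT (cT A) = A.
Proof. by apply/matrixP => i j; rewrite !mxE ccF. Qed.
Lemma cTD p q (A B : 'M[F]_(p, q)) : cT (A + B) = cT A + cT B.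
Proof. by apply/matrixP => i j; rewrite !mxE conjD. Qed.
Lemma cTZ p q a (A : 'M[F]_(p, q)) : cT (a *: A) = conjF a *: cT A.
Proof. by apply/matrixP => i j; rewrite !mxE conjM. Qed.
Lemma cT1 p : cT (1%:M : 'M[F]_p) = 1%:M.
Proof. by apply/matrixP => i j; rewrite !mxE eq_sym; case: (i == j); rewrite /conjF ?mulr1n ?mulr0n ?expr1n ?expr0n. Qed.
Lemma cT0 p q : cT (0 : 'M[F]_(p, q)) = 0.
Proof. by apply/matrixP => i j; rewrite !mxE /conjF expr0n. Qed.

Lemma mx11M p q (A : 'M[F]_(p, 1)) (S : 'M[F]_1) (B : 'M[F]_(1, q)) :
  A *m S *m B = S 0 0 *: (A *m B).
Proof. by rewrite {1}[S]mx11_scalar mul_mx_scalar scalemxAl. Qed.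

Notation cv := 'cV[F]_(n.+1).
Definition Nv (v : cv) : 'M[F]_(n.+1) := v *m cT v.
Definition hh (v w : cv) : F := (cT v *m w) 0 0.

Lemma cTN v : cT (Nv v) = Nv v.
Proof. by rewrite /Nv cTM cTK. Qed.
Lemma NvNv v w : Nv v *m Nv w = (hh v w) *: (v *m cT w).
Proof. by rewrite /Nv mulmxA -(mulmxA v) mx11M. Qed.
Lemma hh_conj v w : hh w v = conjF (hh v w).
Proof. by rewrite /hh -cTE cTM cTK. Qed.
Lemma NvE v i j : Nv v i j = v i 0 * conjF (v j 0).
Proof. by rewrite /Nv mxE big_ord1 cTE. Qed.

Lemma Nv_neq0 v : v != 0 -> Nv v != 0.
Proof.
move=> /eqP v0; apply/eqP => /matrixP N0; apply: v0; apply/matrixP => i j.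
rewrite (ord1 j) mxE; have := N0 i i; rewrite NvE mxE normb.
by case: eqP => // _ /eqP; rewrite oner_eq0.
Qed.

Lemma mkD v : v != 0 -> hh v v = 0 -> D_pred (1%:M + Nv v).
Proof.
move=> v0 hv.
have NN : Nv v *m Nv v = 0 by rewrite NvNv hv scale0r.
have MM : (1%:M + Nv v) *m (1%:M + Nv v) = 1%:M.
  rewrite mulmxDl !mulmxDr !mul1mx mulmx1 NN addr0 -addrA.
  by rewrite -mulr2n -scaler_nat two0 scale0r addr0.
have cM : cT (1%:M + Nv v) = 1%:M + Nv v by rewrite cTD cT1 cTN.
apply/andP; split; [apply/andP; split|apply/andP; split].
- have d2 : \det (1%:M + Nv v) ^+ 2 = 1 by rewrite expr2 -det_mulmx MM det1.
  set d := \det _ in d2 *.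
  have : (d - 1) ^+ 2 = 0.
    have -> : (d - 1) ^+ 2 = d ^+ 2 - 1 - 2%:R * (d - 1) by ring.
    by rewrite d2 subrr two0 mul0r subr0.
  by move/eqP; rewrite expf_eq0 /= subr_eq0.
- have -> : map_mx (@conjF F) (1%:M + Nv v) = (cT (1%:M + Nv v))^T by rewrite /cT trmxK.
  by rewrite cM -trmx_mul MM trmx1.
- rewrite addrC addKr; apply/eqP/anti_leq/andP; split.
    by apply: leq_trans (mxrankM_maxr _ _) (rank_leq_row _).
  by rewrite lt0n mxrank_eq0 Nv_neq0.
- by rewrite addrC addKr NN.
Qed.


Lemma mulE1 p q (A : 'M[F]_(p, 1)) (B : 'M[F]_(1, q)) a b : (A *m B) a b = A a 0 * B 0 b.
Proof. by rewrite mxE big_ord1. Qed.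

Lemma charD (M : 'M[F]_(n.+1)) :
  D_pred M -> exists v : cv, [/\ v != 0, hh v v = 0 & M = 1%:M + Nv v].
Proof.
case/andP => /andP[_ U] /andP[/eqP r1 /eqP NN].
set N := M - 1%:M in r1 NN.
have MN : M = 1%:M + N by rewrite /N addrC subrK.
have U' : cT M *m M = 1%:M.
  by apply: trmx_inj; rewrite trmx_mul trmx1 /cT trmxK; apply/eqP.
clearbody N.
have UN : cT N + N + cT N *m N = 0.
  move: U'; rewrite MN cTD cT1 mulmxDl !mulmxDr !mul1mx mulmx1 => H.
  apply: (addrI 1%:M); rewrite addr0 -[in RHS]H !addrA.
  by rewrite (addrAC 1%:M (cT N) N).
have [C [R CR]] : exists (C : 'M[F]_(n.+1, 1)) (R : 'M[F]_(1, n.+1)), N = C *m R.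
  by move: (col_base N) (row_base N) (mulmx_base N); rewrite r1 => C R <-; exists C, R.
have N0 : N != 0 by rewrite -mxrank_eq0 r1.
have [b Rb] : exists b, R 0 b != 0.
  case/boolP: [exists b, R 0 b != 0] => [/existsP//|/existsPn Hb].
  case/eqP: N0; rewrite CR; apply/matrixP => i j; rewrite mulE1 !mxE.
  by move/negbNE/eqP: (Hb j) ->; rewrite mulr0.
pose c := hh C C.
have UN2 : cT R *m cT C + C *m R + c *: (cT R *m R) = 0.
  by rewrite -UN CR cTM mulmxA -(mulmxA (cT R)) mx11M.
have E a : conjF (R 0 a) * conjF (C b 0) + C a 0 * R 0 b + c * (conjF (R 0 a) * R 0 b) = 0.
  have := congr1 (fun X : 'M[F]_(n.+1) => X a b) UN2; rewrite !mxE !big_ord1 !mxE => <-.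
  by [].
pose lam := (conjF (C b 0) + c * R 0 b) / R 0 b.
have Cl : C = lam *: cT R.
  apply/matrixP => a j; rewrite (ord1 j) !mxE; apply: (mulIf Rb).
  have := E a; rewrite addrAC addrC => /eqP; rewrite addr_eq0 => /eqP ->.
  by rewrite oppF /lam; field.
pose v := cT R.
have Nl : N = lam *: Nv v by rewrite CR Cl -scalemxAl /Nv /v cTK.
have lam0 : lam != 0 by apply: contraNneq N0 => l0; rewrite Nl l0 scale0r.
have Nvv0 : Nv v != 0 by apply: contraNneq N0 => l0; rewrite Nl l0 scaler0.
have hv : hh v v = 0.
  move: NN; rewrite Nl -scalemxAl -scalemxAr scalerA NvNv scalerA -/(Nv v).
  move/eqP; rewrite scalemx_eq0 (negPf Nvv0) orbF -expr2 mulf_eq0 expf_eq0 (negPf lam0) andbF /=.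
  by move/eqP.
have cl : conjF lam = lam.
  move: UN; rewrite Nl cTZ cTN -scalemxAl -scalemxAr scalerA NvNv hv scale0r.
  rewrite scaler0 addr0 -scalerDl => /eqP; rewrite scalemx_eq0 (negPf Nvv0) orbF.
  by rewrite addr_eq0 oppF => /eqP.
have l1 : lam = 1.
  by apply: (mulfI lam0); rewrite mulr1 -expr2; exact: cl.
exists v; split => //.
  by apply: contraNneq Nvv0 => ->; rewrite /Nv mul0mx.
by rewrite MN Nl l1 scale1r.
Qed.


Definition f2F (x : 'F_2) : F := (x : nat)%:R.
Lemma f2F0 : f2F 0 = 0. Proof. by []. Qed.
Lemma f2F1 : f2F 1 = 1. Proof. by []. Qed.
Lemma F2cases (x : 'F_2) : x = 0 \/ x = 1.
Proof. by case: x => [[|[|m]] //= H]; [left|right]; apply/val_inj. Qed.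
Lemma f2FD x y : f2F (x + y) = f2F x + f2F y.
Proof.
case: (F2cases x) => ->; case: (F2cases y) => ->; rewrite ?add0r ?addr0 ?f2F0 ?add0r ?addr0 //.
by rewrite f2F1 addxx.
Qed.
Lemma f2FM x y : f2F (x * y) = f2F x * f2F y.
Proof.
by case: (F2cases x) => ->; case: (F2cases y) => ->; rewrite ?mul0r ?mulr0 ?mul1r ?f2F0 ?f2F1 ?mul0r ?mulr0 ?mul1r.
Qed.
Lemma f2F_eq0 x : (f2F x == 0) = (x == 0).
Proof. by case: (F2cases x) => ->; rewrite ?f2F0 ?f2F1 ?eqxx ?oner_eq0. Qed.
Lemma f2F_nat (b : bool) : f2F (b%:R) = b%:R.
Proof. by case: b. Qed.

Notation DT := (Dtype F n).
Notation AA := {ffun DT -> 'F_2}.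
Definition Nd (d : DT) : 'M[F]_(n.+1) := val d - 1%:M.
Definition psi (a : AA) : 'M[F]_(n.+1) := \sum_(d : DT) f2F (a d) *: Nd d.
Definition dlt (d : DT) : AA := [ffun x => ((x == d) : nat)%:R].

Lemma psiD a b : psi (a + b) = psi a + psi b.
Proof. by rewrite /psi -big_split; apply: eq_bigr => d _; rewrite ffunE f2FD scalerDl. Qed.
Lemma psi0 : psi 0 = 0.
Proof. by rewrite /psi big1 // => d _; rewrite ffunE f2F0 scale0r. Qed.
Lemma psi_sum I r (P : pred I) (f : I -> AA) : psi (\sum_(i <- r | P i) f i) = \sum_(i <- r | P i) psi (f i).
Proof. exact: (big_morph psi psiD psi0). Qed.
Lemma psi_dlt d : psi (dlt d) = Nd d.
Proof.
rewrite /psi (bigD1 d) //= big1 ?addr0 => [|e ed]; rewrite ffunE.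
  by rewrite eqxx f2F1 scale1r.
by rewrite (negPf ed) f2F0 scale0r.
Qed.
Lemma psi_basis (d : DT) : psi (basisM (val d)) = Nd d.
Proof.
suff -> : basisM (val d) = dlt d by rewrite psi_dlt.
by apply/ffunP => x; rewrite !ffunE.
Qed.

Lemma oppM p q (X : 'M[F]_(p, q)) : - X = X.
Proof. by apply/matrixP => i j; rewrite mxE oppF. Qed.

Lemma center0 : in_center (0 : 'M[F]_(n.+1)).
Proof. by split; [exact: g2_zero | move=> y _; rewrite /lie mul0mx mulmx0 subrr]. Qed.
Lemma centerD (x y : 'M[F]_(n.+1)) : in_center x -> in_center y -> in_center (x + y).
Proof.
move=> [gx cx] [gy cy]; split; first exact: g2_add.
by move=> z gz; move: (cx z gz) (cy z gz); rewrite /lie mulmxDl mulmxDr => /eqP; rewrite subr_eq0 => /eqP -> /eqP; rewrite subr_eq0 => /eqP ->; rewrite subrr.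
Qed.
Lemma centerN (x : 'M[F]_(n.+1)) : in_center x -> in_center (- x).
Proof. by rewrite oppM. Qed.
Lemma g2_sum I r (P : pred I) (f : I -> 'M[F]_(n.+1)) :
  (forall i, P i -> in_g2 (f i)) -> in_g2 (\sum_(i <- r | P i) f i).
Proof. by move=> H; elim/big_rec: _ => [|i x Pi gx]; [exact: g2_zero|exact: g2_add (H _ Pi) gx]. Qed.


Lemma valNd (d : DT) : val d = 1%:M + Nd d.
Proof. by rewrite /Nd addrC subrK. Qed.
Lemma NdNv (d : DT) : exists v, [/\ v != 0, hh v v = 0 & Nd d = Nv v].
Proof.
have [v [v0 hv E]] := charD (valP d).
by exists v; split => //; rewrite /Nd E addrC addKr.
Qed.

Lemma comm1 (A B : 'M[F]_(n.+1)) :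
  ((1%:M + A) *m (1%:M + B) == (1%:M + B) *m (1%:M + A)) = (A *m B == B *m A).
Proof.
rewrite !mulmxDl !mulmxDr !mul1mx !mulmx1 !addrA (addrAC _ B A).
by rewrite (inj_eq (addrI _)).
Qed.

Lemma mulv11 p (A : 'M[F]_(p, 1)) (S : 'M[F]_1) : A *m S = S 0 0 *: A.
Proof. by rewrite {1}[S]mx11_scalar mul_mx_scalar. Qed.

Lemma hhZ (v : cv) : v != 0 -> hh v v = 0 -> v *m cT v != 0.
Proof. by move=> v0 _; exact: (Nv_neq0 v0). Qed.

Lemma commE (d e : DT) u w : Nd d = Nv u -> Nd e = Nv w -> u != 0 -> hh u u = 0 ->
  commuteD d e = (hh u w == 0).
Proof.
move=> Eu Ew u0 hu; rewrite /commuteD !valNd comm1 Eu Ew !NvNv [hh w u]hh_conj.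
have [->|h0] := eqVneq (hh u w) 0; first by rewrite /conjF expr0n /= !scale0r !eqxx.
apply/negP => /eqP H.
have := congr1 (fun X : 'M[F]_(n.+1) => X *m u) H.
rewrite -!scalemxAl -!mulmxA !mulv11 -/(hh w u) -/(hh u u) hu scale0r scaler0.
rewrite [hh w u]hh_conj scalerA => /eqP; rewrite scalemx_eq0 (negPf u0) orbF.
by rewrite normb h0 oner_eq0.
Qed.


Lemma addMM p q (X : 'M[F]_(p, q)) : X + X = 0.
Proof. by apply/matrixP => i j; rewrite !mxE addxx. Qed.

Lemma NvNv0 v : hh v v = 0 -> Nv v *m Nv v = 0.
Proof. by move=> hv; rewrite NvNv hv scale0r. Qed.

Lemma dd (d : DT) : val d *m val d = 1%:M.
Proof.
have [v [v0 hv E]] := NdNv d.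
by rewrite valNd E mulmxDl !mulmxDr !mul1mx mulmx1 NvNv0 // addr0 -addrA addMM addr0.
Qed.

Lemma cTval (d : DT) : cT (val d) = val d.
Proof.
have [v [v0 hv E]] := NdNv d.
by rewrite valNd E cTD cT1 cTN.
Qed.

Lemma ede (d e : DT) : exists x : DT, val x = val e *m val d *m val e.
Proof.
have [u [u0 hu Eu]] := NdNv d.
pose y := val e *m u.
have y0 : y != 0.
  apply: contraNneq u0 => y0; by rewrite -[u]mul1mx -(dd e) -mulmxA -/y y0 mulmx0.
have hy : hh y y = 0.
  by rewrite /hh /y cTM cTval mulmxA -(mulmxA (cT u)) dd mulmx1.
exists (exist (fun M => D_pred M) (1%:M + Nv y) (mkD y0 hy)) => /=.
rewrite (valNd d) Eu mulmxDr mulmx1 mulmxDl dd; congr (_ + _).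
by rewrite /Nv /y cTM cTval !mulmxA.
Qed.

Lemma key (A B : 'M[F]_(n.+1)) : B *m B = 0 -> B *m A *m B = B ->
  (1%:M + B) *m (1%:M + A) *m (1%:M + B) - 1%:M = A + B + (A *m B + B *m A).
Proof.
move=> BB BAB; rewrite !mulmxDl !mulmxDr !mul1mx !mulmx1 !mulmxDl !mul1mx -mulmxA BB.
rewrite (mulmxA B A B) BAB add0r (addrAC B (B *m A) B) addMM add0r.
by rewrite (addrAC _ (B *m A)) (addrAC _ (B + A *m B)) (addrC 1%:M A) addrK !addrA.
Qed.


Lemma psi_prodBasis (d e : DT) : psi (prodBasis d e) = lie (Nd d) (Nd e).
Proof.
have [u [u0 hu Eu]] := NdNv d.
have [w [w0 hw Ew]] := NdNv e.
rewrite /prodBasis /lie.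
case: ifP => [nc|]; last first.
  move/negbFE; rewrite /commuteD !valNd comm1 => /eqP ->.
  by rewrite psi0 subrr.
have [x Ex] := ede d e.
have h0 : hh u w != 0 by rewrite -(commE Eu Ew u0 hu).
have BB : Nd e *m Nd e = 0 by rewrite Ew NvNv0.
have BAB : Nd e *m Nd d *m Nd e = Nd e.
  rewrite Ew Eu NvNv -scalemxAl {2}/Nv !mulmxA -(mulmxA _ (cT u)) mx11M -/(Nv w) scalerA.
  by rewrite -/(hh u w) [hh w u]hh_conj mulrC normb h0 scale1r.
have Nx : Nd x = Nd d + Nd e + (Nd d *m Nd e + Nd e *m Nd d).
  by rewrite [Nd x]/Nd Ex (valNd d) (valNd e) key.
rewrite !psiD -Ex !psi_basis Nx oppM.
by rewrite addrA addMM add0r.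
Qed.

Lemma mulpsi a b : psi a *m psi b =
  \sum_(d : DT) \sum_(e : DT) (f2F (a d) * f2F (b e)) *: (Nd d *m Nd e).
Proof.
rewrite /psi mulmx_suml; apply: eq_bigr => d _.
rewrite -scalemxAl mulmx_sumr scaler_sumr; apply: eq_bigr => e _.
by rewrite -scalemxAr scalerA.
Qed.

Lemma liepsi a b : lie (psi a) (psi b) =
  \sum_(d : DT) \sum_(e : DT) (f2F (a d) * f2F (b e)) *: lie (Nd d) (Nd e).
Proof.
rewrite /lie !mulpsi (exchange_big _ _ _ _ _ (fun e d => (f2F (b e) * f2F (a d)) *: (Nd e *m Nd d))).
rewrite -sumrB; apply: eq_bigr => d _; rewrite -sumrB; apply: eq_bigr => e _.
by rewrite scalerBr (mulrC (f2F (b e))).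
Qed.

Lemma psi_if (x : 'F_2) X : psi (if x == 0 then 0 else X) = f2F x *: psi X.
Proof. by case: (F2cases x) => ->; rewrite ?eqxx ?psi0 ?f2F0 ?scale0r // f2F1 scale1r. Qed.

Lemma psi_prodA a b : psi (prodA a b) = lie (psi a) (psi b).
Proof.
rewrite liepsi /prodA psi_sum; apply: eq_bigr => d _.
rewrite psi_sum; apply: eq_bigr => e _.
by rewrite psi_if psi_prodBasis f2FM.
Qed.

Lemma trNd (d e : DT) : \tr (Nd d *m Nd e) = (~~ commuteD d e : nat)%:R.
Proof.
have [u [u0 hu Eu]] := NdNv d.
have [w [w0 hw Ew]] := NdNv e.
rewrite (commE Eu Ew u0 hu) Eu Ew NvNv mxtraceZ mxtrace_mulC trace_mx11 -/(hh w u).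
by rewrite [hh w u]hh_conj normb.
Qed.

Lemma f2F_sum I r (P : pred I) (f : I -> 'F_2) : f2F (\sum_(i <- r | P i) f i) = \sum_(i <- r | P i) f2F (f i).
Proof. exact: (big_morph f2F f2FD f2F0). Qed.

Lemma formE a b : f2F (formA a b) = \tr (psi a *m psi b).
Proof.
rewrite /formA mulpsi f2F_sum raddf_sum; apply: eq_bigr => d _.
rewrite f2F_sum raddf_sum; apply: eq_bigr => e _.
by rewrite !f2FM f2F_nat /= mxtraceZ trNd.
Qed.


Notation I := ('I_n.+1).

Lemma g2E (k l : I) (w : F) (i j : I) : g2gen k l w i j =
  w * ((i == k) && (j == l))%:R + conjF w * ((i == l) && (j == k))%:R +
  w * conjF w * (((i == k) && (j == k))%:R - ((i == l) && (j == l))%:R).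
Proof. by rewrite !mxE. Qed.

Lemma S1 (f : I -> I -> F) (i j : I) :
  \sum_(k : I) \sum_(l : I | (k < l)%N) f k l * ((i == k) && (j == l))%:R = ((i < j)%N)%:R * f i j.
Proof.
rewrite [LHS](bigD1 i) //= [X in _ + X]big1 ?addr0 => [|k ki]; last first.
  by apply: big1 => l _; rewrite eq_sym (negPf ki) mulr0.
case: (ltnP i j) => [ij|ji].
  rewrite [LHS](bigD1 j) //= [X in _ + X]big1 ?addr0 => [|l /andP[_ lj]]; last by rewrite eqxx /= eq_sym (negPf lj) mulr0.
  by rewrite !eqxx mulr1 mul1r.
rewrite mul0r; apply: big1 => l il; rewrite eqxx /=.
case: eqP => [jl|]; last by rewrite mulr0.
by move: il ji; rewrite -jl => il /(leq_trans il); rewrite ltnn.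
Qed.

Lemma S3a (f : I -> I -> F) (i j : I) :
  \sum_(k : I) \sum_(l : I | (k < l)%N) f k l * ((i == k) && (j == k))%:R =
  (i == j)%:R * \sum_(l : I | (i < l)%N) f i l.
Proof.
rewrite [LHS](bigD1 i) //= [X in _ + X]big1 ?addr0 => [|k ki]; last first.
  by apply: big1 => l _; rewrite eq_sym (negPf ki) mulr0.
by rewrite eqxx /= mulr_sumr; apply: eq_bigr => l _; rewrite mulrC eq_sym.
Qed.

Lemma S3b (f : I -> I -> F) (i j : I) :
  \sum_(k : I) \sum_(l : I | (k < l)%N) f k l * ((i == l) && (j == l))%:R =
  (i == j)%:R * \sum_(k : I | (k < i)%N) f k i.
Proof.
rewrite mulr_sumr [RHS]big_mkcond /=; apply: eq_bigr => k _.
case: (ltnP k i) => [ki|ik].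
  rewrite [LHS](bigD1 i) //= [X in _ + X]big1 ?addr0 => [|l /andP[_ li]]; last by rewrite eq_sym (negPf li) mulr0.
  by rewrite eqxx /= mulrC eq_sym.
rewrite big1 // => l kl; case: eqP => [il|]; last by rewrite mulr0.
by move: kl ik; rewrite -il => kl /(leq_trans kl); rewrite ltnn.
Qed.

Definition nn (v : cv) (k : I) : F := v k 0 * conjF (v k 0).

Lemma nn2 v k : nn v k * nn v k = nn v k.
Proof. by rewrite /nn normb; case: (_ != 0); rewrite ?mulr1 ?mulr0. Qed.

Lemma hh_nn v : hh v v = \sum_(k : I) nn v k.
Proof. by rewrite /hh mxE; apply: eq_bigr => k _; rewrite !mxE /nn mulrC. Qed.

Lemma sum_split (g : I -> F) (i : I) :
  \sum_(k : I) g k = \sum_(l : I | (i < l)%N) g l + \sum_(k : I | (k < i)%N) g k + g i.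
Proof.
rewrite (bigID (fun l : I => (i < l)%N)) /= -addrA; congr (_ + _).
rewrite (bigD1 i) /= ?ltnn // addrC; congr (_ + _); apply: eq_bigl => l.
by rewrite -leqNgt ltn_neqAle andbC.
Qed.

Lemma NvG v : hh v v = 0 ->
  Nv v = \sum_(k : I) \sum_(l : I | (k < l)%N) g2gen k l (v k 0 * conjF (v l 0)).
Proof.
move=> hv; apply/matrixP => i j; rewrite NvE summxE.
under eq_bigr => k _ do rewrite summxE.
under eq_bigr => k _ do under eq_bigr => l _ do rewrite g2E mulrBr.
under eq_bigr => k _ do rewrite !big_split /= sumrN.
rewrite !big_split /= sumrN.
rewrite (S1 (fun k l => v k 0 * conjF (v l 0))).
rewrite (S3a (fun k l => v k 0 * conjF (v l 0) * conjF (v k 0 * conjF (v l 0)))).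
rewrite (S3b (fun k l => v k 0 * conjF (v l 0) * conjF (v k 0 * conjF (v l 0)))).
under eq_bigr => k _ do under eq_bigr => l _ do rewrite andbC.
rewrite (S1 (fun k l => conjF (v k 0 * conjF (v l 0)))).
have cc a b : conjF (v a 0 * conjF (v b 0)) = v b 0 * conjF (v a 0).
  by rewrite conjM ccF mulrC.
have nnE a b : v a 0 * conjF (v b 0) * conjF (v a 0 * conjF (v b 0)) = nn v a * nn v b.
  by rewrite cc /nn; ring.
under eq_bigr => l _ do rewrite nnE.
under [X in _ - _ * X]eq_bigr => l _ do rewrite nnE.
rewrite cc.
have [<-|ij] := eqVneq i j.
  rewrite ltnn !mul0r !add0r mul1r oppF mul1r -mulr_sumr -mulr_suml (mulrC (\sum_(i0 : I | (i0 < i)%N) nn v i0)) -mulrDr -/(nn v i).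
  have : hh v v = 0 := hv.
  rewrite hh_nn (sum_split _ i) => /eqP; rewrite addr_eq0 oppF => /eqP ->.
  by rewrite nn2.
rewrite !mul0r subrr addr0.
case: (ltngtP i j) => [lt|gt|/val_inj eq]; last by rewrite eq eqxx in ij.
  by rewrite mul1r mul0r addr0.
by rewrite mul0r mul1r add0r.
Qed.


Lemma g2gen0 (k l : I) : g2gen k l (0 : F) = 0.
Proof. by rewrite /g2gen /conjF expr0n mul0r !scale0r !addr0. Qed.

Lemma g2Nv v : hh v v = 0 -> in_g2 (Nv v).
Proof.
move=> hv; rewrite (NvG hv); apply: g2_sum => k _; apply: g2_sum => l kl.
have [->|w0] := eqVneq (v k 0 * conjF (v l 0)) 0; first by rewrite g2gen0; exact: g2_zero.
by apply: g2_gen => //; rewrite neq_ltn kl.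
Qed.

Lemma g2Nd d : in_g2 (Nd d).
Proof. by have [v [_ hv ->]] := NdNv d; exact: g2Nv. Qed.

Lemma g2psi a : in_g2 (psi a).
Proof.
apply: g2_sum => d _; case: (F2cases (a d)) => ->; rewrite ?f2F0 ?f2F1 ?scale0r ?scale1r.
  exact: g2_zero.
exact: g2Nd.
Qed.

Lemma trNv (X : 'M[F]_(n.+1)) w : \tr (X *m Nv w) = (cT w *m X *m w) 0 0.
Proof. by rewrite /Nv mulmxA mxtrace_mulC trace_mx11 mulmxA. Qed.

Lemma cTdelta (i : I) : cT (delta_mx i 0 : cv) = delta_mx 0 i.
Proof. by apply/matrixP => a b; rewrite !mxE andbC; case: (_ && _); rewrite /conjF ?expr1n ?expr0n. Qed.

Lemma dXd (X : 'M[F]_(n.+1)) (a b : I) : ((delta_mx 0 a : 'M[F]_(1, n.+1)) *m X *m (delta_mx b 0 : 'M[F]_(n.+1, 1))) 0 0 = X a b.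
Proof. by rewrite -rowE -colE !mxE. Qed.

Lemma dXd' (X : 'M[F]_(n.+1)) (a b : I) : ((delta_mx 0 a : 'M[F]_(1, n.+1)) *m X *m (delta_mx b 0 : 'M[F]_(n.+1, 1))) = (X a b)%:M.
Proof. by apply/matrixP => x y; rewrite !ord1 dXd mxE eqxx mulr1n. Qed.

Lemma qform (X : 'M[F]_(n.+1)) (i j : I) (u : F) :
  let w : cv := delta_mx i 0 + u *: delta_mx j 0 in
  (cT w *m X *m w) 0 0 = X i i + u * X i j + conjF u * X j i + conjF u * u * X j j.
Proof.
rewrite /= cTD cTZ !cTdelta !mulmxDl !mulmxDr -!scalemxAl -!scalemxAr !dXd' !mxE /=.
by rewrite !mulr1n !mulrA addrA.
Qed.


Lemma scalarX (X : 'M[F]_(n.+1)) :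
  (forall w : cv, w != 0 -> hh w w = 0 -> (cT w *m X *m w) 0 0 = 0) -> X = (X 0 0)%:M.
Proof.
move=> H.
have [om [om0 om1 omE]] := omega_ex.
have key (i j : I) : i != j -> X i j = 0 /\ X i i = X j j.
  move=> ij.
  have Q u : u != 0 -> X i i + u * X i j + conjF u * X j i + X j j = 0.
    move=> u0; have cu : conjF u * u = 1 by rewrite mulrC norm1.
    rewrite -[X j j]mul1r -cu -(qform X i j u); apply: H.
      apply/eqP => /matrixP/(_ i 0); rewrite !mxE eqxx (negPf ij) /= mulr0 addr0.
      by apply/eqP; rewrite oner_eq0.
    rewrite /hh -[cT _]mulmx1 qform !mxE eqxx (negPf ij) eq_sym (negPf ij) /=.
    by rewrite eqxx !mulr0 !addr0 mulr1 cu addxx.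
  have e1 := Q 1 (oner_neq0 _).
  have e2 := Q om om0.
  have e3 := Q (om ^+ 2) (expf_neq0 _ om0).
  have c1 : conjF (1 : F) = 1 by rewrite /conjF expr1n.
  have c2 : conjF (om ^+ 2) = om by rewrite /conjF -exprM x4.
  rewrite c1 !mul1r in e1; rewrite c2 in e3; rewrite /conjF in e2.
  set a := X i i in e1 e2 e3 *; set b := X i j in e1 e2 e3 *.
  set c := X j i in e1 e2 e3 *; set d := X j j in e1 e2 e3 *.
  have A0 : a + d = 0.
    have -> : a + d = (a + b + c + d) + (a + om * b + om ^+ 2 * c + d) + (a + om ^+ 2 * b + om * c + d)
      - (b + c) * (1 + om + om ^+ 2) - 2%:R * (a + d) by ring.
    by rewrite e1 e2 e3 omE two0 mulr0 mul0r !add0r !subr0 oppr0.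
  have B0 : b * (om * (1 - om)) = 0.
    have -> : b * (om * (1 - om)) = (a + om * b + om ^+ 2 * c + d) - (a + d) - om ^+ 2 * ((a + b + c + d) - (a + d)) by ring.
    by rewrite e1 e2 A0 !subr0 mulr0 subr0.
  split.
    move/eqP: B0; rewrite !mulf_eq0 (negPf om0) subr_eq0 (eq_sym 1 om) (negPf om1) /= !orbF.
    by move/eqP.
  by move/eqP: A0; rewrite addr_eq0 oppF => /eqP.
apply/matrixP => a b; rewrite mxE.
have [<-|ab] := eqVneq a b.
  rewrite mulr1n; have [->//|a0] := eqVneq a 0.
  by have [_ ->] := key a 0 a0.
by rewrite mulr0n; have [-> _] := key a b ab.
Qed.


Lemma rad_center a : radV a -> in_center (psi a).
Proof.
move=> R.
have HX : forall w : cv, w != 0 -> hh w w = 0 -> (cT w *m psi a *m w) 0 0 = 0.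
  move=> w w0 hw.
  pose e : DT := exist (fun M => D_pred M) (1%:M + Nv w) (mkD w0 hw).
  have Ne : Nd e = Nv w by rewrite /Nd /= addrC addKr.
  by rewrite -trNv -Ne -psi_dlt -formE R f2F0.
split; first exact: g2psi.
by move=> y _; rewrite /lie (scalarX HX) scalar_mxC subrr.
Qed.

Lemma center_rad a : in_center (psi a) -> radV a.
Proof.
move=> [_ C] b; apply/eqP; rewrite -f2F_eq0 formE; apply/eqP.
rewrite [psi b]/psi mulmx_sumr raddf_sum; apply: big1 => e _ /=.
rewrite -scalemxAr mxtraceZ.
suff -> : \tr (psi a *m Nd e) = 0 by rewrite mulr0.
have [w [w0 hw Ew]] := NdNv e.
have cm : psi a *m Nv w = Nv w *m psi a.
  by apply/eqP; rewrite -subr_eq0 -Ew; apply/eqP; exact: C (g2Nd e).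
rewrite Ew trNv.
set q := (cT w *m psi a *m w) 0 0.
have : q *: cT w = 0.
  have -> : q *: cT w = cT w *m (psi a *m Nv w).
    by rewrite /Nv !mulmxA {1}[cT w *m psi a *m w]mx11_scalar mul_scalar_mx.
  have hw0 : cT w *m w = 0 by apply/matrixP => x y; rewrite !ord1 [RHS]mxE; exact: hw.
  by rewrite cm /Nv !mulmxA hw0 !mul0mx.
move/eqP; rewrite scalemx_eq0 => /orP[/eqP //|/eqP cw0].
by case/eqP: w0; rewrite -[w]cTK cw0 cT0.
Qed.


Lemma c0F : conjF (0 : F) = 0. Proof. by rewrite /conjF expr0n. Qed.
Lemma c1F : conjF (1 : F) = 1. Proof. by rewrite /conjF expr1n. Qed.

Lemma gen_psi (i j : I) (w : F) : i != j -> w != 0 -> exists a, psi a = g2gen i j w.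
Proof.
move=> ij w0.
have ji : j != i by rewrite eq_sym.
pose vv : cv := delta_mx i 0 + conjF w *: delta_mx j 0.
have cw0 : conjF w != 0 by rewrite /conjF expf_neq0.
have vv0 : vv != 0.
  apply/eqP => /matrixP/(_ i 0); rewrite !mxE eqxx (negPf ij) /= mulr0 addr0.
  by apply/eqP; rewrite oner_eq0.
have hv : hh vv vv = 0.
  rewrite /hh -[cT _]mulmx1 qform !mxE eqxx (negPf ij) eq_sym (negPf ij) /=.
  by rewrite eqxx !mulr0 !addr0 mulr1 mulrC norm1 // addxx.
pose e : DT := exist (fun M => D_pred M) (1%:M + Nv vv) (mkD vv0 hv).
exists (dlt e); rewrite psi_dlt /Nd /= addrC addKr.
apply/matrixP => k l; rewrite NvE g2E !mxE /= !andbT.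
have nw := norm1 w0.
have [->|ki] := eqVneq k i; have [->|li] := eqVneq l i;
  rewrite ?eqxx ?(negPf ij) ?(negPf ji) ?(negPf ki) ?(negPf li) /=;
  try case: (k == j); try case: (l == j);
  rewrite /= ?(mulr0, mul0r, addr0, add0r, mulr1, mul1r, subr0, sub0r, andbT, andbF, c0F, c1F, ccF, oppF, nw) //.
by rewrite mulrC.
Qed.


Lemma lieDl (x y z : 'M[F]_(n.+1)) : lie (x + y) z = lie x z + lie y z.
Proof. by rewrite /lie mulmxDl mulmxDr opprD addrACA. Qed.
Lemma lieDr (x y z : 'M[F]_(n.+1)) : lie z (x + y) = lie z x + lie z y.
Proof. by rewrite /lie mulmxDl mulmxDr opprD addrACA. Qed.
Lemma lieN (x y : 'M[F]_(n.+1)) : lie x y = - lie y x.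
Proof. by rewrite /lie opprB. Qed.

Lemma surj x : in_g2 x -> exists a, in_center (x - psi a).
Proof.
elim => [i j w ij w0 | | {}x y _ [a Ha] _ [b Hb] | {}x y gx [a Ha] gy [b Hb]].
- have [a Ea] := gen_psi ij w0; exists a; rewrite Ea subrr; exact: center0.
- by exists 0; rewrite psi0 subrr; exact: center0.
- exists (a + b); rewrite psiD opprD addrACA; exact: centerD.
- exists (prodA a b); rewrite psi_prodA.
  have E1 : lie x y = lie (psi a) y.
    by rewrite -{1}(subrK (psi a) x) lieDl (Ha.2 y gy) add0r.
  have E2 : lie (psi a) y = lie (psi a) (psi b).
    by rewrite -{1}(subrK (psi b) y) lieDr lieN (Hb.2 _ (g2psi a)) oppr0 add0r.
  rewrite E1 E2 subrr; exact: center0.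
Qed.

End S.

Theorem lemma5p2 (F : finFieldType) (n : nat) (hF : #|F| = 4%N) (hn : (2 <= n)%N) :
  exists psi : Aalg F n -> 'M[F]_(n.+1),
    (forall a b, psi (a + b) = psi a + psi b) /\
    (forall a, in_g2 (psi a)) /\
    (forall a b, in_center (psi (prodA a b) - lie (psi a) (psi b))) /\
    (forall a, in_center (psi a) <-> radV a) /\
    (forall x, in_g2 x -> exists a, in_center (x - psi a)).
Proof.
exists (@psi F n); split; first exact: psiD.
split; first exact: g2psi.
split; first by move=> a b; rewrite psi_prodA // subrr; exact: center0.
split; first by move=> a; split; [exact: center_rad | exact: rad_center].
exact: surj.
Qed.
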